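(* Let $P$ be a finite ranked poset of rank $n$ with minimum $\hat0$ and maximum $\hat1$. If $P$ has an $S$-labeling $\Lambda$, then there is a (permutation) action of the symmetric group $S_n$ on the set $\mathcal{M}(P)$ of maximal chains of $P$ satisfying $\Lambda(\pi\cdot c)=\pi\cdot\Lambda(c)$ for all $\pi\in S_n$ and $c\in\mathcal{M}(P)$, where $S_n$ acts on label sequences by permuting coordinates; and this action is local.
   Context: A labeling of $P$ is a map $\Lambda:\mathcal{M}(P)\to L^n$, $L$ a totally ordered set, written $\Lambda(c)=(\Lambda_1(c),\dots,\Lambda_n(c))$. It is an $S$-labeling if it is injective and for every maximal chain $c=(\hat0=w^0\lessdot w^1\lessdot\cdots\lessdot w^n=\hat1)$ and every $i\in[n-1]$ with $\Lambda_i(c)\neq\Lambda_{i+1}(c)$, there is a unique maximal chain $c'$ differing from $c$ only in the element of rank $i$ such that $\Lambda(c')$ is obtained from $\Lambda(c)$ by interchanging the entries in positions $i$ and $i+1$. $S_n$ acts on $L^n$ by permuting coordinates: $(\pi\cdot\lambda)_j=\lambda_{\pi^{-1}(j)}$. An action of $S_n$ on $\mathcal{M}(P)$ (or on the vector space $\mathbf{C}\mathcal{M}(P)$ with basis $\mathcal{M}(P)$) is local if for every adjacent transposition $\sigma_i=(i,i+1)$ and every maximal chain $m$, $\sigma_i(m)$ is a linear combination of maximal chains that differ from $m$ at most in the element of rank $i$. *)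

(* Defs.v *)
From HB Require Import structures.
From mathcomp Require Import all_boot all_order all_fingroup.
Set Implicit Arguments. Unset Strict Implicit. Unset Printing Implicit Defensive.
Import Order.TTheory.
Local Open Scope order_scope.

Definition covers {d} {P : finPOrderType d} (x y : P) : bool :=
  (x < y) && [forall z : P, ~~ ((x < z) && (z < y))].

Definition ranked_of_rank {d} {P : finPOrderType d} (bot top : P) (n : nat) : Prop :=
  exists rk : P -> nat,
    [/\ rk bot = 0%N, rk top = n & forall x y : P, covers x y -> rk y = (rk x).+1].

(* A maximal chain  bot = w^0 ⋖ w^1 ⋖ ... ⋖ w^n = top, stored as w : 'I_n.+1 -> P
   (w i is the element of rank i). *)
Definition is_mchain {d} {P : finPOrderType d} (bot top : P) (n : nat)
  (w : {ffun 'I_n.+1 -> P}) : bool :=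
  [&& w ord0 == bot, w ord_max == top &
      [forall i : 'I_n, covers (w (widen_ord (leqnSn n) i)) (w (lift ord0 i))]].

Definition mchain {d} {P : finPOrderType d} (bot top : P) (n : nat) :=
  {w : {ffun 'I_n.+1 -> P} | is_mchain bot top w}.

Definition perm_lab {T : Type} {n : nat} (pi : 'S_n) (lam : {ffun 'I_n -> T})
  : {ffun 'I_n -> T} := [ffun j => lam ((pi^-1)%g j)].

(* S-labeling (labels indexed 0..n-1; 0-indexed positions a, b = a+1 correspond
   to the paper's positions i, i+1 with i = a+1, and the element of rank i
   is the chain entry with index b). *)
Definition S_labeling {d} {P : finPOrderType d} (bot top : P) (n : nat)
  {dL} {L : orderType dL} (Lam : mchain bot top n -> {ffun 'I_n -> L}) : Prop :=
  injective Lam /\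
  forall (c : mchain bot top n) (a b : 'I_n), val b = (val a).+1 ->
    Lam c a != Lam c b ->
    exists! c' : mchain bot top n,
      (forall k : 'I_n.+1, val k != val b -> val c' k = val c k) /\
      Lam c' = perm_lab (tperm a b) (Lam c).

(* A (left) permutation action of S_n on a type M.  Mathcomp's product on
   permutations is (s * t) x = t (s x), so function composition pi ∘ sg is sg * pi. *)
Definition is_perm_action {n : nat} {M : Type} (act : 'S_n -> M -> M) : Prop :=
  (forall m, act 1%g m = m) /\
  (forall (pi sg : 'S_n) m, act pi (act sg m) = act (sg * pi)%g m).

(* Locality: the adjacent transposition (a, a+1) (paper: sigma_i, i = a+1)
   moves a chain only in its element of rank a+1. *)
Definition local_action {d} {P : finPOrderType d} (bot top : P) (n : nat)
  (act : 'S_n -> mchain bot top n -> mchain bot top n) : Prop :=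
  forall (a b : 'I_n), val b = (val a).+1 ->
    forall (m : mchain bot top n) (k : 'I_n.+1), val k != val b ->
      val (act (tperm a b) m) k = val m k.

(* Main.v *)
Require Import Defs.
From HB Require Import structures.
From mathcomp Require Import all_boot all_order all_fingroup.
Import Order.TTheory.
Set Implicit Arguments. Unset Strict Implicit.
Local Open Scope order_scope.

Lemma perm_labM {T : Type} {n : nat} (s t : 'S_n) (lam : {ffun 'I_n -> T}) :
  perm_lab (s * t)%g lam = perm_lab t (perm_lab s lam).
Proof. by apply/ffunP => j; rewrite !ffunE invMg permM. Qed.

Lemma perm_lab1 {T : Type} {n : nat} (lam : {ffun 'I_n -> T}) :
  perm_lab 1%g lam = lam.
Proof. by apply/ffunP => j; rewrite !ffunE invg1 perm1. Qed.

Definition Good {d} {P : finPOrderType d} (bot top : P) (n : nat)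
  {dL} {L : orderType dL} (Lam : mchain bot top n -> {ffun 'I_n -> L}) (pi : 'S_n) :=
  forall c, exists c', Lam c' = perm_lab pi (Lam c).

Lemma GoodM {d} {P : finPOrderType d} (bot top : P) (n : nat)
  {dL} {L : orderType dL} (Lam : mchain bot top n -> {ffun 'I_n -> L}) s t :
  Good Lam s -> Good Lam t -> Good Lam (s * t)%g.
Proof.
move=> gs gt c; have [c1 e1] := gs c; have [c2 e2] := gt c1.
by exists c2; rewrite perm_labM -e1.
Qed.

Lemma Good_adj {d} {P : finPOrderType d} (bot top : P) (n : nat)
  {dL} {L : orderType dL} (Lam : mchain bot top n -> {ffun 'I_n -> L})
  (hS : S_labeling Lam) (a b : 'I_n) : val b = (val a).+1 -> Good Lam (tperm a b).
Proof.
move=> hab c; case: (eqVneq (Lam c a) (Lam c b)) => hl.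
  exists c; apply/ffunP => j; rewrite ffunE tpermV.
  by case: tpermP => [->|->|]; rewrite ?hl.
have [c' [[_ h] _]] := hS.2 c a b hab hl; by exists c'.
Qed.

Lemma Good_tperm_k {d} {P : finPOrderType d} (bot top : P) (n : nat)
  {dL} {L : orderType dL} (Lam : mchain bot top n -> {ffun 'I_n -> L})
  (hS : S_labeling Lam) k : forall (i j : 'I_n), val j = (i + k.+1)%N -> Good Lam (tperm i j).
Proof.
elim: k => [|k IH] i j /= hj.
  by apply: (Good_adj hS); rewrite /= hj addn1.
have hm : (i + k.+1 < n)%N by apply: leq_ltn_trans (ltn_ord j); rewrite hj leq_add2l.
set m := Ordinal hm.
have him : i != m by apply/eqP => /(congr1 val) /= /eqP; rewrite -{1}(addn0 i) eqn_add2l.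
have hij : i != j by apply/eqP => /(congr1 val) /= /eqP; rewrite hj -{1}(addn0 i) eqn_add2l.
have -> : tperm i j = ((tperm i m) ^ (tperm m j))%g.
  by rewrite tpermJ tpermL [tperm m j i]tpermD // eq_sym.
rewrite /conjg tpermV.
have hmj : val j = (val m).+1 by rewrite /= hj addnS.
apply: GoodM; first exact: (Good_adj hS hmj).
apply: GoodM; last exact: (Good_adj hS hmj).
exact: IH.
Qed.

Lemma Good_tperm {d} {P : finPOrderType d} (bot top : P) (n : nat)
  {dL} {L : orderType dL} (Lam : mchain bot top n -> {ffun 'I_n -> L})
  (hS : S_labeling Lam) (i j : 'I_n) : Good Lam (tperm i j).
Proof.
have key : forall i j : 'I_n, (i < j)%N -> Good Lam (tperm i j).
  move=> x y hxy; apply: (Good_tperm_k hS (k := (y - x).-1)).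
  by rewrite prednK ?subn_gt0 // subnKC // ltnW.
case: (ltngtP i j) => h.
- exact: key.
- by rewrite tpermC; apply: key.
- have -> : i = j by apply: val_inj.
  by rewrite tperm1 => c; exists c; rewrite perm_lab1.
Qed.

Lemma Good_all {d} {P : finPOrderType d} (bot top : P) (n : nat)
  {dL} {L : orderType dL} (Lam : mchain bot top n -> {ffun 'I_n -> L})
  (hS : S_labeling Lam) (pi : 'S_n) : Good Lam pi.
Proof.
have [ts -> _] := prod_tpermP pi.
elim: ts => [|t ts IH].
  by rewrite big_nil => c; exists c; rewrite perm_lab1.
by rewrite big_cons; apply: GoodM => //; apply: Good_tperm.
Qed.

Theorem theorem4p1 (d : Order.disp_t) (P : finPOrderType d) (bot top : P) (n : nat)
  (hbot : forall x : P, bot <= x) (htop : forall x : P, x <= top)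
  (hrank : ranked_of_rank bot top n)
  (dL : Order.disp_t) (L : orderType dL)
  (Lam : mchain bot top n -> {ffun 'I_n -> L})
  (hS : S_labeling Lam) :
  exists act : 'S_n -> mchain bot top n -> mchain bot top n,
    [/\ is_perm_action act,
        (forall (pi : 'S_n) (c : mchain bot top n), Lam (act pi c) = perm_lab pi (Lam c))
      & local_action act].
Proof.
pose act pi c := odflt c [pick c' | Lam c' == perm_lab pi (Lam c)].
have hact : forall pi c, Lam (act pi c) = perm_lab pi (Lam c).
  move=> pi c; rewrite /act; case: pickP => [c' /eqP //|h].
  have [c' e] := Good_all hS pi c.
  by move: (h c'); rewrite e eqxx.
have inj := hS.1.
exists act; split => //.
- split.
  + by move=> m; apply: inj; rewrite hact perm_lab1.
  + by move=> pi sg m; apply: inj; rewrite !hact perm_labM.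
- move=> a b hab m k hk.
  case: (eqVneq (Lam m a) (Lam m b)) => hl.
    have -> : act (tperm a b) m = m.
      apply: inj; rewrite hact; apply/ffunP => j; rewrite ffunE tpermV.
      by case: tpermP => [->|->|]; rewrite ?hl.
    by [].
  have [c' [[h1 h2] _]] := hS.2 m a b hab hl.
  have -> : act (tperm a b) m = c' by apply: inj; rewrite hact h2.
  exact: h1.
Qed.
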